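(* Fix cylindric partitions $\alpha$ and $\beta$ on $\mathcal{C}_{k,n}$. There exists a bijection \[ \operatorname{CRSK}:\ \bigsqcup_{\substack{\mu\in\operatorname{Cylpar};\\ \mu\subseteq\alpha;\ \mu\subseteq\beta}} \operatorname{SSCT}(\alpha/\mu)\times\operatorname{SSCT}(\beta/\mu)\ \longrightarrow\ \bigsqcup_{\substack{\lambda\in\operatorname{Cylpar};\\ \alpha\subseteq\lambda;\ \beta\subseteq\lambda}} \operatorname{SSCT}(\lambda/\beta)\times\operatorname{SSCT}(\lambda/\alpha) \] such that for every $\mu\in\operatorname{Cylpar}$ with $\mu\subseteq\alpha$, $\mu\subseteq\beta$, every $T\in\operatorname{SSCT}(\alpha/\mu)$ and every $U\in\operatorname{SSCT}(\beta/\mu)$, if $\operatorname{CRSK}(((T,U),\mu))=((P,Q),\lambda)$ then $\operatorname{wt}(T)=\operatorname{wt}(P)$ and $\operatorname{wt}(U)=\operatorname{wt}(Q)$.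
   Context: Fix integers $n>k\ge 1$. A cylindric partition is a weakly decreasing sequence $(\lambda_m)_{m\in\mathbb Z}$ of integers with $\lambda_m=\lambda_{m+k}+n-k$ for all $m$; $\operatorname{Cylpar}$ is the set of cylindric partitions. A point $(x,y)\in\mathbb Z^2$ lies in plane row $x$ and plane column $y$, and lies in $\lambda$ if $y\le\lambda_x$. A box is an equivalence class of points modulo translation by integer multiples of $(-k,n-k)$ (so boxes are elements of the cylinder $\mathcal C_{k,n}=\mathbb Z^2/(-k,n-k)\mathbb Z$); $\pi$ is the projection from points to boxes, and a box lies in $\lambda$ iff its representatives do. We write $\mu\subseteq\lambda$ if $\mu_m\le\lambda_m$ for all $m$; then the boxes of $\lambda/\mu$ are the (finitely many) boxes lying in $\lambda$ but not in $\mu$. Fix a totally ordered alphabet $A$. A semistandard cylindric tableau of shape $\lambda/\mu$ ($\mu\subseteq\lambda$) is a map $R$ from the boxes of $\lambda/\mu$ to $A$ such that $R(\pi(x,y_1))\le R(\pi(x,y_2))$ whenever the points $(x,y_1),(x,y_2)$ lie in $\lambda$ but not in $\mu$ and $y_1<y_2$, and $R(\pi(x_1,y))<R(\pi(x_2,y))$ whenever $(x_1,y),(x_2,y)$ lie in $\lambda$ but not in $\mu$ and $x_1<x_2$; the pair $(\lambda,\mu)$ is part of the data of the tableau. $\operatorname{SSCT}(\lambda/\mu)$ denotes the set of such tableaux. The weight $\operatorname{wt}(R):A\to\mathbb N$ sends $a$ to the number of boxes whose entry is $a$. The disjoint union $\bigsqcup_{s\in S}T_s$ is the set of pairs $(t,s)$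 with $s\in S$, $t\in T_s$. *)

(* Defs.v *)
From mathcomp Require Import all_boot all_order all_algebra.
Set Implicit Arguments. Unset Strict Implicit. Unset Printing Implicit Defensive.
Import Order.TTheory GRing.Theory Num.Theory.
Local Open Scope ring_scope.

(* Points of Z^2: (plane row x, plane column y). *)
Definition point := (int * int)%type.

Definition is_cylpar (n k : nat) (lam : int -> int) : Prop :=
  (forall m m' : int, m <= m' -> lam m' <= lam m) /\
  (forall m : int, lam m = lam (m + k%:Z) + (n%:Z - k%:Z)).

Definition cylpar (n k : nat) := {lam : int -> int | is_cylpar n k lam}.

Definition subpar (mu lam : int -> int) : Prop := forall m : int, mu m <= lam m.

Definition in_par (lam : int -> int) (p : point) : bool := p.2 <= lam p.1.

Definition in_skew (lam mu : int -> int) (p : point) : bool :=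
  in_par lam p && ~~ in_par mu p.

(* A map R from the boxes of lam/mu to A is encoded by its pullback R ∘ π
   along the projection π : Z^2 -> C_{k,n}, i.e. by a function on points
   that is invariant under translation by (-k, n-k), extended by [None]
   outside lam/mu. *)
Definition is_ssct (n k : nat) (d : Order.disp_t) (A : orderType d)
    (lam mu : int -> int) (R : point -> option A) : Prop :=
  [/\ (forall p : point, (R p != None) = in_skew lam mu p),
      (forall x y : int, R (x - k%:Z, y + (n%:Z - k%:Z)) = R (x, y)),
      (forall (x y1 y2 : int) (a b : A),
          R (x, y1) = Some a -> R (x, y2) = Some b -> y1 < y2 -> (a <= b)%O)
    & (forall (x1 x2 y : int) (a b : A),
          R (x1, y) = Some a -> R (x2, y) = Some b -> x1 < x2 -> (a < b)%O)].

Definition SSCT (n k : nat) (d : Order.disp_t) (A : orderType d)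
    (lam mu : int -> int) :=
  {R : point -> option A | @is_ssct n k d A lam mu R}.

(* Weight: number of boxes with entry a.  Each box of lam/mu has exactly one
   representative (x, y) with 0 <= x < k, and then mu_x < y <= lam_x
   (recall mu ⊆ lam whenever SSCT(lam/mu) is used). *)
Definition wt (n k : nat) (d : Order.disp_t) (A : orderType d)
    (lam mu : int -> int) (T : SSCT n k A lam mu) (a : A) : nat :=
  (\sum_(x < k) \sum_(i < absz (lam x%:Z - mu x%:Z))
      (proj1_sig T (x%:Z, (mu x%:Z + i%:Z + 1)%R) == Some a))%N.

Definition CRSK_dom (n k : nat) (d : Order.disp_t) (A : orderType d)
    (alpha beta : cylpar n k) :=
  { mu : {mu : cylpar n k | subpar (proj1_sig mu) (proj1_sig alpha) /\ subpar (proj1_sig mu) (proj1_sig beta)}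
  & (@SSCT n k d A (proj1_sig alpha) (proj1_sig (proj1_sig mu)) * @SSCT n k d A (proj1_sig beta) (proj1_sig (proj1_sig mu)))%type }.

Definition CRSK_cod (n k : nat) (d : Order.disp_t) (A : orderType d)
    (alpha beta : cylpar n k) :=
  { lam : {lam : cylpar n k | subpar (proj1_sig alpha) (proj1_sig lam) /\ subpar (proj1_sig beta) (proj1_sig lam)}
  & (@SSCT n k d A (proj1_sig (proj1_sig lam)) (proj1_sig beta) * @SSCT n k d A (proj1_sig (proj1_sig lam)) (proj1_sig alpha))%type }.

(* Main.v *)
Require Import Defs.
From mathcomp Require Import all_boot all_order all_algebra.
From mathcomp Require Import zify.
From Stdlib Require Import FunctionalExtensionality ProofIrrelevance.
Set Implicit Arguments. Unset Strict Implicit. Unset Printing Implicit Defensive.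
Import Order.TTheory GRing.Theory Num.Theory.
Local Open Scope ring_scope.

Section Arith.
Context (n k : nat).

Definition per (f : int -> int) := forall m : int, f m = f (m + k%:Z) + (n%:Z - k%:Z).
Definition cyl (f : int -> int) := is_cylpar n k f.
Definition hs (a b : int -> int) := forall x : int, a x <= b x /\ b (x + 1) <= a x.

Definition Fr (mu a b : int -> int) : int -> int :=
  fun x => Num.max (a x) (b x) + Num.min (a (x - 1)) (b (x - 1)) - mu (x - 1).
Definition Br (l a b : int -> int) : int -> int :=
  fun x => Num.min (a x) (b x) + Num.max (a (x + 1)) (b (x + 1)) - l (x + 1).

Lemma mono_succ (f : int -> int) : (forall x : int, f (x + 1) <= f x) ->
  forall m m', m <= m' -> f m' <= f m.
Proof.
move=> h m m' le.
have [d hd] : exists d : nat, m' = m + d%:Z.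
  by exists `|m' - m|%N; lia.
rewrite hd; elim: d {hd} => [|d IH]; first by rewrite addr0.
apply: le_trans IH; have -> : m + d.+1%:Z = (m + d%:Z) + 1 by lia.
exact: h.
Qed.

Lemma cylP f : per f -> (forall x : int, f (x + 1) <= f x) -> cyl f.
Proof. by move=> hp hm; split=> //; apply: mono_succ. Qed.

Lemma cyl_per f : cyl f -> per f.
Proof. by case. Qed.

Lemma cyl_succ f (x : int) : cyl f -> f (x + 1) <= f x.
Proof. by case=> h _; apply: h; lia. Qed.

Lemma cyl_mono f (x y : int) : cyl f -> x <= y -> f y <= f x.
Proof. by case=> h _; apply: h. Qed.

Lemma shift1 (x : int) : x + k%:Z - 1 = x - 1 + k%:Z.
Proof. by rewrite addrAC. Qed.
Lemma shift2 (x : int) : x + k%:Z + 1 = x + 1 + k%:Z.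
Proof. by rewrite addrAC. Qed.

Lemma Fr_ok mu a b : cyl mu -> cyl a -> cyl b -> hs mu a -> hs mu b ->
  [/\ cyl (Fr mu a b), hs a (Fr mu a b) & hs b (Fr mu a b)].
Proof.
move=> cm ca cb ha hb.
have key : forall x : int, Fr mu a b (x + 1) <= Num.min (a x) (b x).
  move=> x; rewrite /Fr addrK.
  case: (ha x) => h1 h2; case: (hb x) => h3 h4. lia.
have key2 : forall x : int, Num.max (a x) (b x) <= Fr mu a b x.
  move=> x; rewrite /Fr.
  case: (ha (x - 1)) => h1 h2; case: (hb (x - 1)) => h3 h4; lia.
split.
- apply: cylP.
  + move=> x; rewrite /Fr shift1 (cyl_per ca x) (cyl_per cb x)
      (cyl_per ca (x - 1)) (cyl_per cb (x - 1)) (cyl_per cm (x - 1)).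
    lia.
  + move=> x; have := key x; have := key2 x; lia.
- move=> x; split; first by have := key2 x; lia.
  by have := key x; lia.
- move=> x; split; first by have := key2 x; lia.
  by have := key x; lia.
Qed.

Lemma Br_ok l a b : cyl l -> cyl a -> cyl b -> hs a l -> hs b l ->
  [/\ cyl (Br l a b), hs (Br l a b) a & hs (Br l a b) b].
Proof.
move=> cl ca cb ha hb.
have key : forall x : int, Br l a b x <= Num.min (a x) (b x).
  move=> x; rewrite /Br.
  case: (ha (x + 1)) => h1 h2; case: (hb (x + 1)) => h3 h4; lia.
have key2 : forall x : int, Num.max (a (x + 1)) (b (x + 1)) <= Br l a b x.
  move=> x; rewrite /Br.
  case: (ha x) => h1 h2; case: (hb x) => h3 h4.
  case: (ha (x + 1)) => h5 h6; case: (hb (x + 1)) => h7 h8; lia.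
split.
- apply: cylP.
  + move=> x; rewrite /Br shift2 (cyl_per ca x) (cyl_per cb x)
      (cyl_per ca (x + 1)) (cyl_per cb (x + 1)) (cyl_per cl (x + 1)).
    lia.
  + move=> x; have := key (x + 1); have := key2 x.
    have := cyl_succ (x + 1) ca; have := cyl_succ (x + 1) cb. lia.
- move=> x; split; first by have := key x; lia.
  by have := key2 x; lia.
- move=> x; split; first by have := key x; lia.
  by have := key2 x; lia.
Qed.

Lemma BF mu a b : Br (Fr mu a b) b a = mu.
Proof. apply: functional_extensionality => x; rewrite /Br /Fr addrK; lia. Qed.

Lemma FB l a b : Fr (Br l a b) b a = l.
Proof. apply: functional_extensionality => x; rewrite /Br /Fr subrK; lia. Qed.

Lemma FrC mu a b : Fr mu a b = Fr mu b a.
Proof. apply: functional_extensionality => x; rewrite /Fr; lia. Qed.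

Lemma BrC l a b : Br l a b = Br l b a.
Proof. apply: functional_extensionality => x; rewrite /Br; lia. Qed.

Definition Sz (a b : int -> int) : int := \sum_(x < k) (b x%:Z - a x%:Z).

Lemma sum_shift (hk : (0 < k)%N) (g : int -> int) : (forall y, g y = g (y + k%:Z)) ->
  \sum_(x < k) g (x%:Z - 1) = \sum_(x < k) g x%:Z.
Proof.
move=> hg; case: k hk hg => // k' _ hg.
rewrite big_ord_recl big_ord_recr /= addrC; congr (_ + _).
  by rewrite hg; congr g; lia.
by apply: eq_bigr => i _; congr g; rewrite /bump /=; lia.
Qed.

Lemma Fr_size (hk : (0 < k)%N) mu a b : per mu -> per a -> per b -> Sz b (Fr mu a b) = Sz mu a.
Proof.
move=> pm pa pb; rewrite /Sz /Fr.
have e : forall x : 'I_k,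
  Num.max (a x%:Z) (b x%:Z) + Num.min (a (x%:Z - 1)) (b (x%:Z - 1)) - mu (x%:Z - 1) - b x%:Z
  = (Num.max (a x%:Z) (b x%:Z) - b x%:Z) + (Num.min (a (x%:Z - 1)) (b (x%:Z - 1)) - mu (x%:Z - 1)).
  by move=> x; lia.
rewrite (eq_bigr _ (fun x _ => e x)) big_split /=.
rewrite (sum_shift hk (g := fun y => Num.min (a y) (b y) - mu y)); last first.
  by move=> y; rewrite (pa y) (pb y) (pm y); lia.
rewrite -big_split /=; apply: eq_bigr => x _; lia.
Qed.

Lemma Fr_size2 (hk : (0 < k)%N) mu a b : per mu -> per a -> per b -> Sz a (Fr mu a b) = Sz mu b.
Proof. by move=> *; rewrite FrC Fr_size. Qed.

End Arith.

Section Grid.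
Context (T : Type) (L : T -> T -> T -> T) (e1 e2 : nat -> T).

Fixpoint Gr (i : nat) : nat -> T :=
  match i with
  | 0 => e1
  | S i' => fix H (j : nat) : T :=
      match j with
      | 0 => e2 (S i')
      | S j' => L (Gr i' j') (H j') (Gr i' (S j'))
      end
  end.

Lemma Gr0j j : Gr 0 j = e1 j. Proof. by []. Qed.
Lemma GrS0 i : Gr i.+1 0 = e2 i.+1. Proof. by []. Qed.
Lemma GrSS i j : Gr i.+1 j.+1 = L (Gr i j) (Gr i.+1 j) (Gr i j.+1). Proof. by []. Qed.

Lemma Gr_unique (m : nat) (g : nat -> nat -> T) :
  (forall j, (j <= m)%N -> g 0%N j = e1 j) ->
  (forall i, (i < m)%N -> g i.+1 0%N = e2 i.+1) ->
  (forall i j, (i < m)%N -> (j < m)%N -> g i.+1 j.+1 = L (g i j) (g i.+1 j) (g i j.+1)) ->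
  forall i j, (i <= m)%N -> (j <= m)%N -> g i j = Gr i j.
Proof.
move=> h0 h1 h2; elim=> [|i IH] j hi hj; first by rewrite h0.
elim: j hj => [|j IHj] hj; first by rewrite h1.
rewrite h2 // ?GrSS ?IH ?IHj //; try lia.
Qed.

Context (Cy : T -> Prop) (Rel : T -> T -> Prop).
Hypothesis loc : forall x a b, Cy x -> Cy a -> Cy b -> Rel x a -> Rel x b ->
  [/\ Cy (L x a b), Rel a (L x a b) & Rel b (L x a b)].

Lemma Gr_valid (m : nat) :
  (forall j, (j <= m)%N -> Cy (e1 j)) -> (forall j, (j <= m)%N -> Cy (e2 j)) ->
  (forall j, (j < m)%N -> Rel (e1 j) (e1 j.+1)) ->
  (forall j, (j < m)%N -> Rel (e2 j) (e2 j.+1)) -> e1 0%N = e2 0%N ->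
  (forall i j, (i <= m)%N -> (j <= m)%N -> Cy (Gr i j)) /\
  (forall i j, (i < m)%N -> (j <= m)%N -> Rel (Gr i j) (Gr i.+1 j)) /\
  (forall i j, (i <= m)%N -> (j < m)%N -> Rel (Gr i j) (Gr i j.+1)).
Proof.
move=> c1 c2 r1 r2 e0.
have G0 : forall i, Gr i 0 = e2 i by case.
have step : forall i, (i < m)%N ->
   (forall j, (j <= m)%N -> Cy (Gr i j)) -> (forall j, (j < m)%N -> Rel (Gr i j) (Gr i j.+1)) ->
   forall j, (j <= m)%N -> [/\ Cy (Gr i.+1 j), Rel (Gr i j) (Gr i.+1 j) &
     (0 < j)%N -> Rel (Gr i.+1 j.-1) (Gr i.+1 j)].
  move=> i hi C R; elim=> [|j IHj] hj.
  - by rewrite !G0; split=> //; [apply: c2; lia | apply: r2].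
  - case: IHj; first lia.
    move=> cj rj _.
    have := loc (C j _) cj (C j.+1 _) rj (R j _); case=> //; try lia.
have main : forall i, (i <= m)%N ->
   (forall j, (j <= m)%N -> Cy (Gr i j)) /\ (forall j, (j < m)%N -> Rel (Gr i j) (Gr i j.+1)).
  elim=> [|i IH] hi; first by split=> j hj; [apply: c1 | apply: r1].
  case: IH; first lia.
  move=> C R; split=> j hj.
  - by case: (step i hi C R j hj).
  - by case: (step i hi C R j.+1 hj) => _ _; apply.
split; first by move=> i j hi hj; case: (main i hi) => C _; apply: C.
split; last by move=> i j hi hj; case: (main i hi) => _ R; apply: R.
move=> i j hi hj; case: (main i _) => [|C R]; first lia.
by case: (step i hi C R j hj).
Qed.
End Grid.

Lemma Gr_rev (T : Type) (L1 L2 : T -> T -> T -> T) e1 e2 m :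
  (forall x a b, L2 (L1 x a b) b a = x) ->
  forall i j, (i <= m)%N -> (j <= m)%N ->
  Gr L2 (fun j => Gr L1 e1 e2 m (m - j)) (fun i => Gr L1 e1 e2 (m - i) m) i j
  = Gr L1 e1 e2 (m - i) (m - j).
Proof.
move=> hL i j hi hj; symmetry.
apply: (Gr_unique (m := m) (g := fun i j => Gr L1 e1 e2 (m - i) (m - j))) hi hj.
- by move=> j' _; rewrite subn0.
- by move=> i' _; rewrite subn0.
- move=> i' j' hi' hj'.
  have -> : (m - i' = (m - i'.+1).+1)%N by lia.
  have -> : (m - j' = (m - j'.+1).+1)%N by lia.
  by rewrite GrSS hL.
Qed.

Section GridSize.
Context (n k : nat) (hk : (0 < k)%N).
Context (u t : nat -> int -> int) (m : nat).
Hypothesis cG : forall i j, (i <= m)%N -> (j <= m)%N -> cyl n k (Gr Fr u t i j).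

Lemma Gr_size1 i j : (i < m)%N -> (j <= m)%N ->
  Sz k (Gr Fr u t i j) (Gr Fr u t i.+1 j) = Sz k (Gr Fr u t i 0) (Gr Fr u t i.+1 0).
Proof.
move=> hi; elim: j => [//|j IH] hj.
rewrite GrSS (Fr_size (n:=n) hk) // ?IH //; try lia; apply: cyl_per; apply: cG; lia.
Qed.

Lemma Gr_size2 i j : (i <= m)%N -> (j < m)%N ->
  Sz k (Gr Fr u t i j) (Gr Fr u t i j.+1) = Sz k (Gr Fr u t 0 j) (Gr Fr u t 0 j.+1).
Proof.
move=> + hj; elim: i => [//|i IH] hi.
rewrite GrSS (Fr_size2 (n:=n) hk) // ?IH //; try lia; apply: cyl_per; apply: cG; lia.
Qed.
End GridSize.

Section GridSizeB.
Context (n k : nat) (hk : (0 < k)%N).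
Context (e1 e2 : nat -> int -> int) (m : nat).
Hypothesis cG : forall i j, (i <= m)%N -> (j <= m)%N -> cyl n k (Gr Br e1 e2 i j).

Lemma GrB_size1 i j : (i < m)%N -> (j <= m)%N ->
  Sz k (Gr Br e1 e2 i.+1 j) (Gr Br e1 e2 i j) = Sz k (Gr Br e1 e2 i.+1 0) (Gr Br e1 e2 i 0).
Proof.
move=> hi; elim: j => [//|j IH] hj.
rewrite -IH; last by lia.
set l := Gr Br e1 e2 i j; set a := Gr Br e1 e2 i.+1 j; set b := Gr Br e1 e2 i j.+1.
set mu := Gr Br e1 e2 i.+1 j.+1.
have el : l = Fr mu b a by rewrite /mu GrSS FB.
rewrite el (Fr_size (n:=n) hk) //; apply: cyl_per; apply: cG; lia.
Qed.

Lemma GrB_size2 i j : (i <= m)%N -> (j < m)%N ->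
  Sz k (Gr Br e1 e2 i j.+1) (Gr Br e1 e2 i j) = Sz k (Gr Br e1 e2 0 j.+1) (Gr Br e1 e2 0 j).
Proof.
move=> + hj; elim: i => [//|i IH] hi.
rewrite -IH; last by lia.
set l := Gr Br e1 e2 i j; set a := Gr Br e1 e2 i.+1 j; set b := Gr Br e1 e2 i j.+1.
set mu := Gr Br e1 e2 i.+1 j.+1.
have el : l = Fr mu b a by rewrite /mu GrSS FB.
rewrite el (Fr_size2 (n:=n) hk) //; apply: cyl_per; apply: cG; lia.
Qed.
End GridSizeB.

Lemma prefix_count (P : pred nat) L :
  (forall i j, (i <= j)%N -> (j < L)%N -> P j -> P i) ->
  forall l, (l < L)%N -> P l = (l < count P (iota 0 L))%N.
Proof.
elim: L => [//|L IH] hP l hl.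
have hP' : forall i j, (i <= j)%N -> (j < L)%N -> P j -> P i.
  by move=> i j h1 h2; apply: hP; lia.
have hc := count_size P (iota 0 L); rewrite size_iota in hc.
have -> : iota 0 L.+1 = iota 0 L ++ [:: L] by rewrite -addn1 iotaD.
rewrite count_cat /= addn0.
case hL: (P L).
- have allP : forall i, (i <= L)%N -> P i by move=> i hi; apply: (hP i L).
  have -> : count P (iota 0 L) = L.
    rewrite (eq_in_count (a2 := predT)) ?count_predT ?size_iota // => i.
    rewrite mem_iota => hi; apply: allP; lia.
  by rewrite allP; lia.
- rewrite addn0; case: (ltngtP l L) => [hlL| |->]; last by rewrite hL; lia.
  + exact: IH.
  + lia.
Qed.

Lemma count_interval a b L : (a <= b)%N -> (b <= L)%N ->
  count (fun l => (a <= l)%N && (l < b)%N) (iota 0 L) = (b - a)%N.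
Proof.
move=> hab hbL.
have -> : L = (a + (b - a) + (L - b))%N by lia.
rewrite !iotaD !count_cat.
rewrite (eq_in_count (a2 := pred0)); last by move=> l; rewrite mem_iota /=; lia.
rewrite (eq_in_count (s := iota (0 + a) (b - a)) (a2 := predT)); last by move=> l; rewrite mem_iota /=; lia.
rewrite (eq_in_count (s := iota (0 + (a + (b - a))) (L - b)) (a2 := pred0)); last by move=> l; rewrite mem_iota /=; lia.
by rewrite !count_pred0 count_predT size_iota; lia.
Qed.

Section Tab.
Context (n k : nat) (hk : (0 < k)%N) (d : Order.disp_t) (A : orderType d).

Definition oth (s : seq A) i : option A := nth None (map Some s) i.
Definition pref (s : seq A) i : pred A := fun a => has (fun b => (a <= b)%O) (take i s).

Definition cut (R : point -> option A) (mu lam : int -> int) (p : pred A) : int -> int :=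
  fun x => mu x + (count (fun l : nat => oapp p false (R (x, mu x + l%:Z + 1)))
                        (iota 0 `|lam x - mu x|))%:Z.
Definition chainT R mu lam s (i : nat) := cut R mu lam (pref s i).
Definition idx (c : nat -> int -> int) (m : nat) (x y : int) : nat :=
  count (fun j => c j.+1 x < y) (iota 0 m.-1).
Definition tab (c : nat -> int -> int) (s : seq A) : point -> option A :=
  fun p => if in_skew (c (size s)) (c 0%N) p then oth s (idx c (size s) p.1 p.2) else None.

Lemma oth_lt s i : (i < size s)%N -> forall x0, oth s i = Some (nth x0 s i).
Proof. by move=> h x0; rewrite /oth (nth_map x0). Qed.
Lemma oth_ge s i : (size s <= i)%N -> oth s i = None.
Proof. by move=> h; rewrite /oth nth_default // size_map. Qed.

Lemma oth_neq s i : (i < size s)%N -> oth s i != None.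
Proof. by rewrite /oth; elim: s i => [|a s IH] [|i] //= /IH. Qed.

Lemma oth_some s i a : oth s i = Some a -> a = nth a s i /\ (i < size s)%N.
Proof.
rewrite /oth; elim: s i => [|b s IH] [|i] //=; first by case=> ->.
by move/IH => [h1 h2].
Qed.

Lemma pref_down s i a b : (a <= b)%O -> pref s i b -> pref s i a.
Proof. by move=> hab /hasP [c hc hbc]; apply/hasP; exists c => //; apply: le_trans hbc. Qed.

Lemma pref_nth s j x0 i : sorted <%O s -> (i < size s)%N ->
  pref s j (nth x0 s i) = (i < j)%N.
Proof.
move=> ss hi; apply/idP/idP.
- case/hasP=> b /(nthP x0) [i' hi' <-]; rewrite size_take in hi'.
  have hi'j : (i' < j)%N by move: hi'; case: (ltnP j (size s)) => hh /= // h; exact: leq_trans h hh.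
  have hi's : (i' < size s)%N by move: hi'; case: (ltnP j (size s)) => hh /= h //; exact: ltn_trans h hh.
  rewrite (nth_take x0 hi'j) (lt_sorted_leq_nth x0 ss); [lia | exact: hi | exact: hi's].
- move=> hij; apply/hasP; exists (nth x0 s i) => //.
  by rewrite -(nth_take x0 hij); apply: mem_nth; rewrite size_take; case: (ltnP j (size s)).
Qed.

Lemma pref0 s a : pref s 0 a = false.
Proof. by rewrite /pref take0. Qed.

Lemma pref_all s a : a \in s -> pref s (size s) a.
Proof. by move=> h; apply/hasP; exists a; rewrite ?take_size. Qed.

Lemma pref_mono s i a : pref s i a -> pref s i.+1 a.
Proof.
by rewrite /pref -addn1 takeD has_cat => ->.
Qed.

Section Ssct.
Context (lam mu : int -> int) (R : point -> option A).
Hypothesis hR : is_ssct n k lam mu R.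

Lemma ssct_some p : in_skew lam mu p -> exists a, R p = Some a.
Proof. case: hR => h1 _ _ _; rewrite -h1; case: (R p) => // a _; by exists a. Qed.
Lemma ssct_none p : ~~ in_skew lam mu p -> R p = None.
Proof. case: hR => h1 _ _ _; rewrite -h1; by case: (R p). Qed.
Lemma ssct_skew p a : R p = Some a -> in_skew lam mu p.
Proof. case: hR => h1 _ _ _; by rewrite -h1 => ->. Qed.

Lemma cut_prefix (p : pred A) (x y : int) : (forall a b, (a <= b)%O -> p b -> p a) ->
  mu x < y -> y <= lam x ->
  (y <= cut R mu lam p x) = oapp p false (R (x, y)).
Proof.
move=> pd h1 h2; rewrite /cut.
set L := `|lam x - mu x|%N.
set P := (fun l : nat => oapp p false (R (x, mu x + l%:Z + 1))).
have skew : forall l : nat, (l < L)%N -> in_skew lam mu (x, mu x + l%:Z + 1).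
  move=> l hl; rewrite /in_skew /in_par /=; apply/andP; split; lia.
have hP : forall i j, (i <= j)%N -> (j < L)%N -> P j -> P i.
  move=> i j hij hj; rewrite /P.
  have [b hb] := ssct_some (skew j hj); have [a ha] := ssct_some (skew i (leq_ltn_trans hij hj)).
  rewrite ha hb /=; apply: pd.
  have [eij|nij] := eqVneq i j.
  - by subst; move: ha; rewrite hb => -[->].
  - case: hR => _ _ h3 _; apply: (h3 _ _ _ _ _ ha hb); lia.
have hl : (absz (y - mu x - 1)%R < L)%N by lia.
have -> : (x, y) = (x, mu x + (absz (y - mu x - 1)%R)%:Z + 1) by congr pair; lia.
rewrite -/(P _) (prefix_count hP hl); lia.
Qed.

Hypothesis cmu : cyl n k mu.
Hypothesis clam : cyl n k lam.
Hypothesis sub : subpar mu lam.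

Lemma cut_ge (p : pred A) (x : int) : mu x <= cut R mu lam p x.
Proof. by rewrite /cut; lia. Qed.

Lemma cut_le (p : pred A) (x : int) : cut R mu lam p x <= lam x.
Proof.
rewrite /cut; have := count_size (fun l : nat => oapp p false (R (x, mu x + l%:Z + 1)))
   (iota 0 `|lam x - mu x|); rewrite size_iota; have := sub x; lia.
Qed.

Lemma cut_per (p : pred A) : per n k (cut R mu lam p).
Proof.
move=> x; rewrite /cut.
have e1 := cyl_per cmu x; have e2 := cyl_per clam x.
have -> : `|lam x - mu x|%N = `|lam (x + k%:Z) - mu (x + k%:Z)|%N by lia.
rewrite (eq_count (a2 := fun l : nat => oapp p false (R (x + k%:Z, mu (x + k%:Z) + l%:Z + 1)))).
  by rewrite e1 addrAC.
move=> l /=; case: hR => _ h2 _ _; rewrite -(h2 (x + k%:Z)); congr (oapp p false (R (_, _))).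
  by rewrite addrK.
by rewrite e1; lia.
Qed.

Lemma cut_le_prev (p q : pred A) (x : int) :
  (forall a b, (a <= b)%O -> p b -> p a) ->
  (forall a b, (a <= b)%O -> q b -> q a) ->
  (forall a b, (a < b)%O -> p b -> (exists pt, R pt = Some a) ->
      (exists pt, R pt = Some b) -> q a) ->
  cut R mu lam p (x + 1) <= cut R mu lam q x.
Proof.
move=> pd qd pq; set y := cut R mu lam p (x + 1).
case: (lerP y (mu x)) => hy; first by apply: le_trans hy (cut_ge _ _).
have hy1 : mu (x + 1) < y by have := cyl_succ x cmu; lia.
have hy2 : y <= lam (x + 1) by apply: cut_le.
have hy3 : y <= lam x by have := cyl_succ x clam; lia.
have := cut_prefix pd hy1 hy2; rewrite lexx.
case E: (R (x + 1, y)) => [e|] //= pe.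
have [e' E'] : exists e', R (x, y) = Some e'.
  by apply: ssct_some; rewrite /in_skew /in_par /=; apply/andP; split; lia.
have lt : (e' < e)%O by case: hR => _ _ _ h4; apply: (h4 _ _ _ _ _ E' E); lia.
by rewrite (cut_prefix qd hy hy3) E' /=; apply: (pq _ _ lt (esym pe)); eexists; eassumption.
Qed.

Lemma cut_cyl (p : pred A) : (forall a b, (a <= b)%O -> p b -> p a) -> cyl n k (cut R mu lam p).
Proof.
move=> pd; apply: (cylP (cut_per p)) => x; apply: cut_le_prev => //.
by move=> a b /ltW h1 h2 _ _; apply: pd h1 h2.
Qed.

Lemma cut_eq_lam (p : pred A) (x : int) : (forall l : nat, (l < `|lam x - mu x|)%N ->
    oapp p false (R (x, mu x + l%:Z + 1))) -> cut R mu lam p x = lam x.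
Proof.
move=> h; rewrite /cut (eq_in_count (a2 := predT)).
  by rewrite count_predT size_iota; have := sub x; lia.
by move=> l; rewrite mem_iota => hl; apply: h; lia.
Qed.

Section Chain.
Context (s : seq A).
Hypothesis ss : sorted <%O s.
Hypothesis ins : forall pt a, R pt = Some a -> a \in s.

Lemma pref_in j a : a \in s -> pref s j a = (index a s < j)%N.
Proof. by move=> h; rewrite -{1}(nth_index a h) pref_nth // index_mem. Qed.

Lemma lt_index a b : a \in s -> b \in s -> (a < b)%O = (index a s < index b s)%N.
Proof.
move=> ha hb; rewrite -{1}(nth_index a ha) -{1}(nth_index a hb).
by rewrite (lt_sorted_ltn_nth a ss) ?inE ?index_mem.
Qed.

Lemma chain0 : chainT R mu lam s 0 = mu.
Proof.
apply: functional_extensionality => x; rewrite /chainT /cut.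
rewrite (eq_count (a2 := pred0)) ?count_pred0 ?addr0 // => l /=.
by case: (R _) => //= a; rewrite pref0.
Qed.

Lemma chainm : chainT R mu lam s (size s) = lam.
Proof.
apply: functional_extensionality => x; apply: cut_eq_lam => l hl.
have [a ha] : exists a, R (x, mu x + l%:Z + 1) = Some a.
  by apply: ssct_some; rewrite /in_skew /in_par /=; apply/andP; split; have := sub x; lia.
by rewrite ha /=; apply: pref_all; apply: ins ha.
Qed.

Lemma chain_cyl i : cyl n k (chainT R mu lam s i).
Proof. by apply: cut_cyl => a b; apply: pref_down. Qed.

Lemma chain_hs i : hs (chainT R mu lam s i) (chainT R mu lam s i.+1).
Proof.
move=> x; split.
- rewrite /chainT /cut lerD2l lez_nat; apply: sub_count => l /=.
  by case: (R _) => //= a; apply: pref_mono.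
- apply: cut_le_prev => //.
  + by move=> a b; apply: pref_down.
  + by move=> a b; apply: pref_down.
  + move=> a b hab hb [pa ha] [pb hb'].
    have ia := ins ha; have ib := ins hb'.
    move: hb; rewrite !pref_in // => hb.
    move: hab; rewrite lt_index // => hab; lia.
Qed.
End Chain.

End Ssct.
Lemma eq_cuts (a b lo hi : int) : lo <= a <= hi -> lo <= b <= hi ->
  (forall y, lo < y -> y <= hi -> (y <= a) = (y <= b)) -> a = b.
Proof.
move=> /andP [h1 h2] /andP [h3 h4] h.
case: (ltgtP a b) => // hab.
- by have := h b (le_lt_trans h1 hab) h4; rewrite lexx (leNgt b a) hab.
- by have := h a (le_lt_trans h3 hab) h2; rewrite lexx (leNgt a b) hab.
Qed.

Lemma sum_count (P : pred nat) L : (\sum_(i < L) P i)%N = count P (iota 0 L).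
Proof.
rewrite -(big_mkord xpredT (fun i => (P i : nat))) /index_iota subn0.
by elim: (iota 0 L) => [|a r IH]; rewrite ?big_nil ?big_cons ?IH.
Qed.

Section TabChain.
Context (s : seq A) (c : nat -> int -> int).
Hypothesis ss : sorted <%O s.
Hypothesis hcc : forall i, (i <= size s)%N -> cyl n k (c i).
Hypothesis hch : forall i, (i < size s)%N -> hs (c i) (c i.+1).

Lemma chain_le i j (x : int) : (i <= j)%N -> (j <= size s)%N -> c i x <= c j x.
Proof.
move=> hij hj; elim: j hij hj => [|j IH] hij hj; first by have -> : i = 0%N by lia.
case: (ltngtP i j.+1) hij => // [hlt|->] _; last by [].
apply: le_trans (IH _ _) _; try lia.
by case: (@hch j hj x).
Qed.

Lemma idx_char (x y : int) : c 0%N x < y -> y <= c (size s) x ->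
  forall j, (j <= size s)%N -> (idx c (size s) x y < j)%N = (y <= c j x).
Proof.
move=> h1 h2 j hj.
have hm : (0 < size s)%N.
  by case: (size s) h2 => // h2; have := lt_le_trans h1 h2; rewrite ltxx.
set P := fun j => c j.+1 x < y.
have hP : forall i j, (i <= j)%N -> (j < (size s).-1)%N -> P j -> P i.
  move=> i' j' hij hj'; rewrite /P => h; apply: le_lt_trans h.
  apply: chain_le; lia.
have hcnt := count_size P (iota 0 (size s).-1); rewrite size_iota in hcnt.
rewrite /idx -/P.
case: (posnP j) => [->|hj0].
  by rewrite ltn0; apply/esym/negbTE; rewrite -ltNge.
case: (ltngtP j (size s)) hj => // [hjm|->] _; last by rewrite h2; lia.
have hl : (j.-1 < (size s).-1)%N by lia.
have := prefix_count hP hl; rewrite /P.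
have -> : j.-1.+1 = j by lia.
move=> e; apply/idP/idP => H.
- by move: e; case: (leP y (c j x)) => // _ /esym; lia.
- by move: e; rewrite ltNge H /=; lia.
Qed.

Lemma idx_lt (x y : int) : c 0%N x < y -> y <= c (size s) x -> (idx c (size s) x y < size s)%N.
Proof. by move=> h1 h2; rewrite idx_char. Qed.

Lemma tab_some (x y : int) a : tab c s (x, y) = Some a ->
  [/\ c 0%N x < y, y <= c (size s) x, (idx c (size s) x y < size s)%N &
      a = nth a s (idx c (size s) x y)].
Proof.
rewrite /tab /in_skew /in_par /=; case: ifP => // /andP [h2]; rewrite -ltNge => h1.
have hl := idx_lt h1 h2.
by rewrite (oth_lt hl a) => -[e]; split => //; rewrite e.
Qed.

Lemma tab_ssct : is_ssct n k (c (size s)) (c 0%N) (tab c s).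
Proof.
split.
- case=> x y; rewrite /tab; case: ifP => //.
  rewrite /in_skew /in_par /= => /andP [h2]; rewrite -ltNge => h1.
  by apply: oth_neq; apply: idx_lt.
- move=> x y.
  have per_i : forall i, (i <= size s)%N -> forall x : int, c i (x - k%:Z) = c i x + (n%:Z - k%:Z).
    by move=> i hi x'; rewrite (cyl_per (hcc hi) (x' - k%:Z)) subrK.
  rewrite /tab /in_skew /in_par /= !per_i // !lerD2r.
  case: ifP => // _; congr oth; rewrite /idx; apply: eq_in_count => j.
  by rewrite mem_iota => hj /=; rewrite per_i ?ltrD2r //; lia.
- move=> x y1 y2 a b /tab_some [h1 h2 hl ea] /tab_some [h3 h4 hl' eb] hy.
  rewrite ea eb (set_nth_default a b hl') (lt_sorted_leq_nth a ss) ?inE //.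
  rewrite /idx; apply: sub_count => j /= hj; exact: lt_le_trans hj (ltW hy).
- move=> x1 x2 y a b /tab_some [h1 h2 hl ea] /tab_some [h3 h4 hl' eb] hx.
  rewrite ea eb (set_nth_default a b hl') (lt_sorted_ltn_nth a ss) ?inE //.
  set i2 := idx c (size s) x2 y.
  have e1 : y <= c i2.+1 x2 by rewrite -idx_char.
  have e2 : c i2.+1 x2 <= c i2.+1 (x1 + 1) by apply: cyl_mono; [apply: hcc | lia].
  have e3 : c i2.+1 (x1 + 1) <= c i2 x1 by case: (@hch i2 hl' x1).
  by rewrite idx_char //; [apply: le_trans e1 (le_trans e2 e3) | lia].
Qed.
Lemma chain_tab j : (j <= size s)%N -> chainT (tab c s) (c 0%N) (c (size s)) s j = c j.
Proof.
move=> hj; apply: functional_extensionality => x.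
have hR := tab_ssct.
have sub : subpar (c 0%N) (c (size s)) by move=> y; apply: chain_le.
apply: (@eq_cuts _ _ (c 0%N x) (c (size s) x)).
- by rewrite cut_ge cut_le.
- by rewrite !chain_le.
move=> y h1 h2.
rewrite (cut_prefix hR) //; last by move=> a b; apply: pref_down.
rewrite /tab /in_skew /in_par /= h2 -ltNge h1 /=.
have hl := idx_lt h1 h2.
case E: (oth s _) => [a|]; last by move: (oth_neq hl); rewrite E.
case: (oth_some E) => -> hl' /=.
by rewrite pref_nth // idx_char.
Qed.

Definition wtR (R : point -> option A) (mu lam : int -> int) (a : A) : nat :=
  (\sum_(x < k) \sum_(i < absz (lam x%:Z - mu x%:Z))
      (R (x%:Z, (mu x%:Z + i%:Z + 1)%R) == Some a))%N.

Lemma wt_tab a : wtR (tab c s) (c 0%N) (c (size s)) a =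
  if a \in s then (\sum_(x < k) absz (c (index a s).+1 x%:Z - c (index a s) x%:Z))%N else 0%N.
Proof.
rewrite /wtR; case: ifP => ha; last first.
  apply: big1 => x _; apply: big1 => i _.
  case: eqP => // /tab_some [_ _ hl e].
  by move: ha; rewrite e mem_nth.
apply: eq_bigr => x _.
set x' := x%:Z.
rewrite (sum_count (fun i => tab c s (x', c 0%N x' + i%:Z + 1) == Some a)).
set ia := index a s.
have hia : (ia < size s)%N by rewrite index_mem.
have us : uniq s by apply: lt_sorted_uniq.
have l0 : c 0%N x' <= c ia x' by apply: chain_le; lia.
have l1 : c ia x' <= c ia.+1 x' by apply: chain_le; lia.
have l2 : c ia.+1 x' <= c (size s) x' by apply: chain_le; lia.
rewrite (eq_in_count (a2 := fun i : nat => (absz (c ia x' - c 0%N x') <= i)%N &&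
                                   (i < absz (c ia.+1 x' - c 0%N x'))%N)).
  by rewrite count_interval; lia.
move=> i; rewrite mem_iota => hi.
set y := c 0%N x' + i%:Z + 1.
have h1 : c 0%N x' < y by rewrite /y; lia.
have h2 : y <= c (size s) x' by rewrite /y; lia.
have hl := idx_lt h1 h2.
rewrite /tab /in_skew /in_par /= h2 -ltNge h1 /= (oth_lt hl a).
have -> : (Some (nth a s (idx c (size s) x' y)) == Some a) = (idx c (size s) x' y == ia).
  apply/eqP/eqP => [[e]|->]; last by rewrite nth_index.
  by rewrite /ia -e index_uniq.
have e1 := idx_char h1 h2 (j := ia) (ltnW hia).
have e2 := idx_char h1 h2 (j := ia.+1) hia.
rewrite eqn_leq -ltnS e2 leqNgt e1 /y; apply/andP/andP; case; lia.
Qed.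

End TabChain.
Lemma tab_chainT (lam mu : int -> int) (R : point -> option A) (s : seq A) :
  is_ssct n k lam mu R -> cyl n k mu -> cyl n k lam -> subpar mu lam ->
  sorted <%O s -> (forall pt a, R pt = Some a -> a \in s) ->
  tab (chainT R mu lam s) s = R.
Proof.
move=> hR cmu clam sub ss ins.
set c := chainT R mu lam s.
have hch : forall i, (i < size s)%N -> hs (c i) (c i.+1) by move=> i _; apply: chain_hs.
apply: functional_extensionality => -[x y].
rewrite /tab {1}/c chainm // {1}/c chain0.
case: ifP => hsk; last by rewrite (ssct_none hR) ?hsk.
have [e E] := ssct_some hR hsk; rewrite E.
have es := ins _ _ E.
move: hsk; rewrite /in_skew /in_par /= => /andP [h2]; rewrite -ltNge => h1.
have h1' : c 0%N x < y by rewrite /c chain0.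
have h2' : y <= c (size s) x by rewrite /c chainm.
have key : forall j, (j <= size s)%N -> (idx c (size s) x y < j)%N = (index e s < j)%N.
  move=> j hj; rewrite (idx_char ss hch h1' h2' hj) /c /chainT.
  rewrite (cut_prefix hR) //; last by move=> a b; apply: pref_down.
  by rewrite E /= pref_in.
have hie : (index e s < size s)%N by rewrite index_mem.
have hid := idx_lt ss hch h1' h2'.
have -> : idx c (size s) x y = index e s.
  have := key _ hid; have := key _ hie; rewrite !ltnSn; lia.
by rewrite (oth_lt hie e) nth_index.
Qed.

End Tab.

Lemma sum_pos m (F : 'I_m -> nat) : (0 < \sum_(i < m) F i)%N -> exists i, (0 < F i)%N.
Proof.
case: (boolP [exists i, 0 < F i]%N) => [/existsP [i hi] _|]; first by exists i.
rewrite negb_exists => /forallP h; rewrite big1 // => i _.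
by move: (h i); rewrite lt0n negbK => /eqP.
Qed.

Section Ents.
Context (n k : nat) (hk : (0 < k)%N) (d : Order.disp_t) (A : orderType d).

Definition ents (R : point -> option A) (mu lam : int -> int) : seq A :=
  pmap id (flatten [seq [seq R (x%:Z, (mu x%:Z + i%:Z + 1)%R) | i <- iota 0 (absz (lam x%:Z - mu x%:Z))]
                   | x <- iota 0 k]).

Lemma mem_ents R mu lam a : (a \in ents R mu lam) = (0 < wtR k R mu lam a)%N.
Proof.
rewrite /ents mem_pmap map_id; apply/idP/idP.
- case/flattenP=> l /mapP [x hx ->] /mapP [i hi E].
  rewrite mem_iota in hx; rewrite mem_iota in hi.
  rewrite /wtR (bigD1 (Ordinal (hx : (x < k)%N))) //= (bigD1 (Ordinal (hi : (i < _)%N))) //=.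
  by rewrite -E eqxx.
- rewrite /wtR => /sum_pos [x] /sum_pos [i]; rewrite lt0b => /eqP E.
  apply/flattenP; exists [seq R (x%:Z, (mu x%:Z + i0%:Z + 1)%R) | i0 <- iota 0 (absz (lam x%:Z - mu x%:Z))].
    by apply/mapP; exists (nat_of_ord x) => //; rewrite mem_iota /=.
  by apply/mapP; exists (nat_of_ord i) => //; rewrite mem_iota /=.
Qed.

Lemma shiftR (R : point -> option A) :
  (forall x y : int, R (x - k%:Z, y + (n%:Z - k%:Z)) = R (x, y)) ->
  forall (q : nat) (x y : int), R (x + (q%:Z * k%:Z), y) = R (x, y + q%:Z * (n%:Z - k%:Z)).
Proof.
move=> h; elim=> [|q IH] x y; first by rewrite !mul0r !addr0.
rewrite -h (_ : x + q.+1%:Z * k%:Z - k%:Z = x + q%:Z * k%:Z); last by lia.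
rewrite IH; congr (R (_, _)); lia.
Qed.

Lemma ents_in lam mu R pt a : is_ssct n k lam mu R -> subpar mu lam ->
  R pt = Some a -> a \in ents R mu lam.
Proof.
move=> hR sub; case: pt => x y E.
have hkz : k%:Z != 0 by lia.
have [x0 [q [hx0 ex]]] : exists (x0 : nat) (q : int), (x0 < k)%N /\ x = x0%:Z + q * k%:Z.
  exists (absz (x %% k%:Z)%Z), (x %/ k%:Z)%Z; split.
    by have := ltz_pmod x (d := k%:Z) (ltac:(lia)); have := modz_ge0 x hkz; lia.
  by rewrite {1}(divz_eq x k%:Z); have := modz_ge0 x hkz; lia.
have [y0 E0] : exists y0, R (x0%:Z, y0) = Some a.
  case: hR => _ h2 _ _.
  case: (lerP 0 q) => hq.
    exists (y + (absz q)%:Z * (n%:Z - k%:Z)); rewrite -shiftR // -E ex; congr (R (_, _)); lia.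
  exists (y - (absz q)%:Z * (n%:Z - k%:Z)).
  rewrite -E ex.
  have e1 : y = (y - (absz q)%:Z * (n%:Z - k%:Z)) + (absz q)%:Z * (n%:Z - k%:Z) by lia.
  rewrite [in RHS]e1 -shiftR //; congr (R (_, _)); lia.
have := ssct_skew hR E0; rewrite /in_skew /in_par /= => /andP [h2]; rewrite -ltNge => h1.
rewrite mem_ents /wtR (bigD1 (Ordinal hx0)) //= (bigD1 (Ordinal (_ : (absz (y0 - mu x0%:Z - 1)%R < absz (lam x0%:Z - mu x0%:Z)%R)%N))) //=.
- by have := sub x0; lia.
- move=> H.
  have E1 : R (x0%:Z, mu x0%:Z + (absz (y0 - mu x0%:Z - 1)%R)%:Z + 1) = Some a.
    by rewrite -E0; congr (R (_, _)); lia.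
  by rewrite E1 eqxx.
Qed.

Definition slist R1 mu1 lam1 R2 mu2 lam2 : seq A :=
  sort <=%O (undup (ents R1 mu1 lam1 ++ ents R2 mu2 lam2)).

Lemma slist_sorted R1 mu1 lam1 R2 mu2 lam2 : sorted <%O (slist R1 mu1 lam1 R2 mu2 lam2).
Proof. by rewrite /slist sort_lt_sorted undup_uniq. Qed.

Lemma mem_slist R1 mu1 lam1 R2 mu2 lam2 a : (a \in slist R1 mu1 lam1 R2 mu2 lam2) =
  (0 < wtR k R1 mu1 lam1 a)%N || (0 < wtR k R2 mu2 lam2 a)%N.
Proof. by rewrite /slist mem_sort mem_undup mem_cat !mem_ents. Qed.

Lemma slist_eq R1 mu1 lam1 R2 mu2 lam2 R1' mu1' lam1' R2' mu2' lam2' :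
  (forall a, wtR k R1 mu1 lam1 a = wtR k R1' mu1' lam1' a) ->
  (forall a, wtR k R2 mu2 lam2 a = wtR k R2' mu2' lam2' a) ->
  slist R1 mu1 lam1 R2 mu2 lam2 = slist R1' mu1' lam1' R2' mu2' lam2'.
Proof.
move=> h1 h2; apply: (irr_sorted_eq (leT := <%O)).
- by move=> ? ? ?; apply: lt_trans.
- by move=> ?; rewrite ltxx.
- exact: slist_sorted.
- exact: slist_sorted.
- by move=> a; rewrite !mem_slist h1 h2.
Qed.

Lemma slist_in1 lam mu R R2 mu2 lam2 pt a : is_ssct n k lam mu R -> subpar mu lam ->
  R pt = Some a -> a \in slist R mu lam R2 mu2 lam2.
Proof. by move=> hR sub E; rewrite /slist mem_sort mem_undup mem_cat (ents_in hR sub E). Qed.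

Lemma slist_in2 lam mu R R1 mu1 lam1 pt a : is_ssct n k lam mu R -> subpar mu lam ->
  R pt = Some a -> a \in slist R1 mu1 lam1 R mu lam.
Proof. by move=> hR sub E; rewrite /slist mem_sort mem_undup mem_cat (ents_in hR sub E) orbT. Qed.

Lemma sum_absz (a b : int -> int) : (forall x, a x <= b x) ->
  ((\sum_(x < k) absz (b x%:Z - a x%:Z))%N)%:Z = Sz k a b.
Proof.
move=> h; rewrite -natz natr_sum /Sz; apply: eq_bigr => x _.
by rewrite natz; have := h x%:Z; lia.
Qed.

End Ents.

Lemma Gr_congr (T : Type) (L : T -> T -> T -> T) e1 e2 e1' e2' m :
  (forall j, (j <= m)%N -> e1 j = e1' j) -> (forall i, (i <= m)%N -> e2 i = e2' i) ->
  forall i j, (i <= m)%N -> (j <= m)%N -> Gr L e1 e2 i j = Gr L e1' e2' i j.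
Proof.
move=> h1 h2 i j hi hj.
apply: (Gr_unique (m := m) (g := Gr L e1 e2)) hi hj.
- by move=> j' hj'; rewrite Gr0j h1.
- by move=> i' hi'; rewrite GrS0 h2.
- by [].
Qed.

Section Main.
Context (n k : nat) (hk : (0 < k)%N) (d : Order.disp_t) (A : orderType d).
Context (alpha beta : int -> int) (ca : cyl n k alpha) (cb : cyl n k beta).

Lemma tab_ssct' (s : seq A) c lo hi : sorted <%O s ->
  (forall i, (i <= size s)%N -> cyl n k (c i)) -> (forall i, (i < size s)%N -> hs (c i) (c i.+1)) ->
  c 0%N = lo -> c (size s) = hi -> is_ssct n k hi lo (tab c s).
Proof. by move=> ss h1 h2 <- <-; apply: tab_ssct. Qed.

Lemma wt_tab' (s : seq A) c lo hi a : sorted <%O s ->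
  (forall i, (i < size s)%N -> hs (c i) (c i.+1)) ->
  c 0%N = lo -> c (size s) = hi -> wtR k (tab c s) lo hi a =
  if a \in s then (\sum_(x < k) absz (c (index a s).+1 x%:Z - c (index a s) x%:Z))%N else 0%N.
Proof. by move=> ss h2 <- <-; apply: wt_tab. Qed.

Lemma chain_tab' (s : seq A) c lo hi j : sorted <%O s ->
  (forall i, (i <= size s)%N -> cyl n k (c i)) -> (forall i, (i < size s)%N -> hs (c i) (c i.+1)) ->
  c 0%N = lo -> c (size s) = hi -> (j <= size s)%N -> chainT (tab c s) lo hi s j = c j.
Proof. by move=> ss h1 h2 <- <- hj; exact: (chain_tab hk ss h1 h2 hj). Qed.

Lemma tab_ext (s : seq A) c c' : (forall i, (i <= size s)%N -> c i = c' i) -> tab c s = tab c' s.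
Proof.
move=> h; rewrite /tab h // (h 0%N) //; apply: functional_extensionality => pt.
congr (if _ then oth s _ else _); rewrite /idx; apply: eq_in_count => j.
by rewrite mem_iota => hj /=; rewrite h //; lia.
Qed.

Lemma Sz_eq_nat (a b a' b' : int -> int) : (forall x, a x <= b x) -> (forall x, a' x <= b' x) ->
  Sz k a b = Sz k a' b' ->
  (\sum_(x < k) absz (b x%:Z - a x%:Z))%N = (\sum_(x < k) absz (b' x%:Z - a' x%:Z))%N.
Proof. by move=> h1 h2 e; apply/eqP; rewrite -eqz_nat !sum_absz // e. Qed.

Section Fwd.
Context (mu : int -> int) (RT RU : point -> option A).
Hypothesis cmu : cyl n k mu.
Hypothesis sa : subpar mu alpha.
Hypothesis sb : subpar mu beta.
Hypothesis hT : is_ssct n k alpha mu RT.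
Hypothesis hU : is_ssct n k beta mu RU.

Definition fs := slist k RT mu alpha RU mu beta.
Definition ft := chainT RT mu alpha fs.
Definition fu := chainT RU mu beta fs.
Definition fG := Gr Fr fu ft.

Lemma fss : sorted <%O fs. Proof. exact: slist_sorted. Qed.
Lemma finT pt a : RT pt = Some a -> a \in fs. Proof. by move=> E; rewrite /fs; exact: (slist_in1 hk RU mu beta hT sa E). Qed.
Lemma finU pt a : RU pt = Some a -> a \in fs. Proof. by move=> E; rewrite /fs; exact: (slist_in2 hk RT mu alpha hU sb E). Qed.
Lemma ft_cyl i : cyl n k (ft i). Proof. rewrite /ft; exact: (chain_cyl hk hT cmu ca sa fs i). Qed.
Lemma fu_cyl i : cyl n k (fu i). Proof. rewrite /fu; exact: (chain_cyl hk hU cmu cb sb fs i). Qed.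
Lemma ft_hs i : hs (ft i) (ft i.+1). Proof. rewrite /ft; exact: (chain_hs hk hT cmu ca sa fss finT i). Qed.
Lemma fu_hs i : hs (fu i) (fu i.+1). Proof. rewrite /fu; exact: (chain_hs hk hU cmu cb sb fss finU i). Qed.
Lemma ft0 : ft 0%N = mu. Proof. by rewrite /ft chain0. Qed.
Lemma fu0 : fu 0%N = mu. Proof. by rewrite /fu chain0. Qed.
Lemma ftm : ft (size fs) = alpha. Proof. rewrite /ft; exact: (chainm hk hT sa fss finT). Qed.
Lemma fum : fu (size fs) = beta. Proof. rewrite /fu; exact: (chainm hk hU sb fss finU). Qed.

Lemma fG_valid :
  (forall i j, (i <= size fs)%N -> (j <= size fs)%N -> cyl n k (fG i j)) /\
  (forall i j, (i < size fs)%N -> (j <= size fs)%N -> hs (fG i j) (fG i.+1 j)) /\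
  (forall i j, (i <= size fs)%N -> (j < size fs)%N -> hs (fG i j) (fG i j.+1)).
Proof.
apply: Gr_valid.
- by move=> x a b cx cA cB h1 h2; apply: Fr_ok.
- by move=> j _; apply: fu_cyl.
- by move=> j _; apply: ft_cyl.
- by move=> j _; apply: fu_hs.
- by move=> j _; apply: ft_hs.
- by rewrite fu0 ft0.
Qed.

Lemma fG_cyl i j : (i <= size fs)%N -> (j <= size fs)%N -> cyl n k (fG i j).
Proof. by case: fG_valid => h _; apply: h. Qed.
Lemma fG_hs1 i j : (i < size fs)%N -> (j <= size fs)%N -> hs (fG i j) (fG i.+1 j).
Proof. by case: fG_valid => _ [h _]; apply: h. Qed.
Lemma fG_hs2 i j : (i <= size fs)%N -> (j < size fs)%N -> hs (fG i j) (fG i j.+1).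
Proof. by case: fG_valid => _ [_ h]; apply: h. Qed.

Lemma fG_i0 i : fG i 0%N = ft i.
Proof. by case: i => [|i] //; rewrite /fG Gr0j fu0 ft0. Qed.
Lemma fG_0j j : fG 0%N j = fu j.
Proof. by []. Qed.

Definition flam := fG (size fs) (size fs).
Definition fP := tab (fun i => fG i (size fs)) fs.
Definition fQ := tab (fun j => fG (size fs) j) fs.

Lemma flam_cyl : cyl n k flam.
Proof. exact: fG_cyl. Qed.

Lemma fP_ssct : is_ssct n k flam beta fP.
Proof.
apply: tab_ssct' fss _ _ _ _ => //.
- by move=> i hi; apply: fG_cyl.
- by move=> i hi; apply: fG_hs1.
- by rewrite fG_0j fum.
Qed.

Lemma fQ_ssct : is_ssct n k flam alpha fQ.
Proof.
apply: tab_ssct' fss _ _ _ _ => //.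
- by move=> i hi; apply: fG_cyl.
- by move=> i hi; apply: fG_hs2.
- by rewrite fG_i0 ftm.
Qed.

Lemma fsub_a : subpar alpha flam.
Proof.
move=> x; rewrite -ftm -fG_i0 /flam.
apply: (chain_le hk fss (c := fun j => fG (size fs) j)) => //.
by move=> i hi; apply: fG_hs2.
Qed.

Lemma fsub_b : subpar beta flam.
Proof.
move=> x; rewrite -fum -fG_0j /flam.
apply: (chain_le hk fss (c := fun i => fG i (size fs))) => //.
by move=> i hi; apply: fG_hs1.
Qed.

Lemma fwtP a : wtR k fP beta flam a = wtR k RT mu alpha a.
Proof.
rewrite -(tab_chainT hk hT cmu ca sa fss finT) /fP.
have h1 : forall i, (i < size fs)%N -> hs (fG i (size fs)) (fG i.+1 (size fs)).
  by move=> i hi; apply: fG_hs1.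
have e1 : fG 0%N (size fs) = beta by rewrite fG_0j fum.
rewrite (@wt_tab' fs (fun i => fG i (size fs)) beta flam a fss h1 e1 erefl).
rewrite (@wt_tab' fs ft mu alpha a fss (fun i _ => ft_hs i) ft0 ftm).
case: ifP => // ha; have hia : (index a fs < size fs)%N by rewrite index_mem.
apply: Sz_eq_nat.
- by move=> x; case: (fG_hs1 hia (leqnn _) x).
- by move=> x; case: (ft_hs (index a fs) x).
rewrite /fG (Gr_size1 (n:=n) hk (u := fu) (t := ft) (m := size fs) (fun i j hi hj => fG_cyl hi hj)) //.
by rewrite -/fG !fG_i0.
Qed.

Lemma fwtQ a : wtR k fQ alpha flam a = wtR k RU mu beta a.
Proof.
rewrite -(tab_chainT hk hU cmu cb sb fss finU) /fQ.
have h1 : forall i, (i < size fs)%N -> hs (fG (size fs) i) (fG (size fs) i.+1).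
  by move=> i hi; apply: fG_hs2.
have e1 : fG (size fs) 0%N = alpha by rewrite fG_i0 ftm.
rewrite (@wt_tab' fs (fun j => fG (size fs) j) alpha flam a fss h1 e1 erefl).
rewrite (@wt_tab' fs fu mu beta a fss (fun i _ => fu_hs i) fu0 fum).
case: ifP => // ha; have hia : (index a fs < size fs)%N by rewrite index_mem.
apply: Sz_eq_nat.
- by move=> x; case: (fG_hs2 (leqnn _) hia x).
- by move=> x; case: (fu_hs (index a fs) x).
by rewrite /fG (Gr_size2 (n:=n) hk (u := fu) (t := ft) (m := size fs) (fun i j hi hj => fG_cyl hi hj)).
Qed.

End Fwd.
Section Bwd.
Context (lam : int -> int) (RP RQ : point -> option A).
Hypothesis clam : cyl n k lam.
Hypothesis sal : subpar alpha lam.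
Hypothesis sbl : subpar beta lam.
Hypothesis hP : is_ssct n k lam beta RP.
Hypothesis hQ : is_ssct n k lam alpha RQ.

Definition bs := slist k RP beta lam RQ alpha lam.
Definition bp := chainT RP beta lam bs.
Definition bq := chainT RQ alpha lam bs.
Definition bH := Gr Br (fun j => bq (size bs - j)) (fun i => bp (size bs - i)).

Lemma bss : sorted <%O bs. Proof. exact: slist_sorted. Qed.
Lemma binP pt a : RP pt = Some a -> a \in bs.
Proof. by move=> E; rewrite /bs; exact: (slist_in1 hk RQ alpha lam hP sbl E). Qed.
Lemma binQ pt a : RQ pt = Some a -> a \in bs.
Proof. by move=> E; rewrite /bs; exact: (slist_in2 hk RP beta lam hQ sal E). Qed.
Lemma bp_cyl i : cyl n k (bp i). Proof. rewrite /bp; exact: (chain_cyl hk hP cb clam sbl bs i). Qed.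
Lemma bq_cyl i : cyl n k (bq i). Proof. rewrite /bq; exact: (chain_cyl hk hQ ca clam sal bs i). Qed.
Lemma bp_hs i : hs (bp i) (bp i.+1). Proof. rewrite /bp; exact: (chain_hs hk hP cb clam sbl bss binP i). Qed.
Lemma bq_hs i : hs (bq i) (bq i.+1). Proof. rewrite /bq; exact: (chain_hs hk hQ ca clam sal bss binQ i). Qed.
Lemma bp0 : bp 0%N = beta. Proof. by rewrite /bp chain0. Qed.
Lemma bq0 : bq 0%N = alpha. Proof. by rewrite /bq chain0. Qed.
Lemma bpm : bp (size bs) = lam. Proof. rewrite /bp; exact: (chainm hk hP sbl bss binP). Qed.
Lemma bqm : bq (size bs) = lam. Proof. rewrite /bq; exact: (chainm hk hQ sal bss binQ). Qed.

Lemma bH_valid :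
  (forall i j, (i <= size bs)%N -> (j <= size bs)%N -> cyl n k (bH i j)) /\
  (forall i j, (i < size bs)%N -> (j <= size bs)%N -> hs (bH i.+1 j) (bH i j)) /\
  (forall i j, (i <= size bs)%N -> (j < size bs)%N -> hs (bH i j.+1) (bH i j)).
Proof.
apply: (Gr_valid (Rel := fun a b => hs b a)).
- by move=> x a b cx cA cB h1 h2; apply: Br_ok.
- by move=> j _; apply: bq_cyl.
- by move=> j _; apply: bp_cyl.
- move=> j hj /=; have -> : (size bs - j = (size bs - j.+1).+1)%N by lia.
  exact: bq_hs.
- move=> j hj /=; have -> : (size bs - j = (size bs - j.+1).+1)%N by lia.
  exact: bp_hs.
- by rewrite subn0 bqm bpm.
Qed.
Lemma bH_cyl i j : (i <= size bs)%N -> (j <= size bs)%N -> cyl n k (bH i j).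
Proof. by case: bH_valid => h _; apply: h. Qed.
Lemma bH_hs1 i j : (i < size bs)%N -> (j <= size bs)%N -> hs (bH i.+1 j) (bH i j).
Proof. by case: bH_valid => _ [h _]; apply: h. Qed.
Lemma bH_hs2 i j : (i <= size bs)%N -> (j < size bs)%N -> hs (bH i j.+1) (bH i j).
Proof. by case: bH_valid => _ [_ h]; apply: h. Qed.

Lemma bH_i0 i : bH i 0%N = bp (size bs - i).
Proof. by case: i => [|i] //; rewrite /bH Gr0j !subn0 bqm bpm. Qed.
Lemma bH_0j j : bH 0%N j = bq (size bs - j).
Proof. by []. Qed.

Definition bmu := bH (size bs) (size bs).
Definition bT := tab (fun i => bH (size bs - i) (size bs)) bs.
Definition bU := tab (fun j => bH (size bs) (size bs - j)) bs.

Lemma bT_cyl i : (i <= size bs)%N -> cyl n k (bH (size bs - i) (size bs)).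
Proof. by move=> hi; apply: bH_cyl; lia. Qed.
Lemma bT_hs i : (i < size bs)%N -> hs (bH (size bs - i) (size bs)) (bH (size bs - i.+1) (size bs)).
Proof.
move=> hi; have -> : (size bs - i = (size bs - i.+1).+1)%N by lia.
by apply: bH_hs1; lia.
Qed.
Lemma bU_cyl j : (j <= size bs)%N -> cyl n k (bH (size bs) (size bs - j)).
Proof. by move=> hj; apply: bH_cyl; lia. Qed.
Lemma bU_hs j : (j < size bs)%N -> hs (bH (size bs) (size bs - j)) (bH (size bs) (size bs - j.+1)).
Proof.
move=> hj; have -> : (size bs - j = (size bs - j.+1).+1)%N by lia.
by apply: bH_hs2; lia.
Qed.
Lemma bT0 : bH (size bs - 0) (size bs) = bmu. Proof. by rewrite subn0. Qed.
Lemma bTm : bH (size bs - size bs) (size bs) = alpha. Proof. by rewrite subnn bH_0j subnn bq0. Qed.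
Lemma bU0 : bH (size bs) (size bs - 0) = bmu. Proof. by rewrite subn0. Qed.
Lemma bUm : bH (size bs) (size bs - size bs) = beta. Proof. by rewrite subnn bH_i0 subnn bp0. Qed.

Lemma bmu_cyl : cyl n k bmu.
Proof. by apply: bH_cyl. Qed.

Lemma bT_ssct : is_ssct n k alpha bmu bT.
Proof. exact: (tab_ssct' bss bT_cyl bT_hs bT0 bTm). Qed.
Lemma bU_ssct : is_ssct n k beta bmu bU.
Proof. exact: (tab_ssct' bss bU_cyl bU_hs bU0 bUm). Qed.

Lemma bsub_a : subpar bmu alpha.
Proof.
move=> x; rewrite -bTm -{1}bT0.
exact: (chain_le hk bss (c := fun i => bH (size bs - i) (size bs)) bT_hs x (leq0n _) (leqnn _)).
Qed.
Lemma bsub_b : subpar bmu beta.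
Proof.
move=> x; rewrite -bUm -{1}bU0.
exact: (chain_le hk bss (c := fun j => bH (size bs) (size bs - j)) bU_hs x (leq0n _) (leqnn _)).
Qed.

Lemma bwtT a : wtR k bT bmu alpha a = wtR k RP beta lam a.
Proof.
rewrite -(tab_chainT hk hP cb clam sbl bss binP) /bT.
rewrite (@wt_tab' bs (fun i => bH (size bs - i) (size bs)) bmu alpha a bss bT_hs bT0 bTm).
rewrite (@wt_tab' bs bp beta lam a bss (fun i _ => bp_hs i) bp0 bpm).
case: ifP => // ha; have hia : (index a bs < size bs)%N by rewrite index_mem.
apply: Sz_eq_nat.
- by move=> x; case: (bT_hs hia x).
- by move=> x; case: (bp_hs (index a bs) x).
set i' := (size bs - (index a bs).+1)%N.
have e1 : (size bs - index a bs = i'.+1)%N by rewrite /i'; lia.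
rewrite e1 /bH (GrB_size1 (n:=n) hk (m := size bs) (fun i j hi hj => bH_cyl hi hj)) //; try lia.
rewrite -/bH !bH_i0; congr (Sz k (bp _) (bp _)); rewrite /i'; lia.
Qed.

Lemma bwtU a : wtR k bU bmu beta a = wtR k RQ alpha lam a.
Proof.
rewrite -(tab_chainT hk hQ ca clam sal bss binQ) /bU.
rewrite (@wt_tab' bs (fun j => bH (size bs) (size bs - j)) bmu beta a bss bU_hs bU0 bUm).
rewrite (@wt_tab' bs bq alpha lam a bss (fun i _ => bq_hs i) bq0 bqm).
case: ifP => // ha; have hia : (index a bs < size bs)%N by rewrite index_mem.
apply: Sz_eq_nat.
- by move=> x; case: (bU_hs hia x).
- by move=> x; case: (bq_hs (index a bs) x).
set i' := (size bs - (index a bs).+1)%N.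
have e1 : (size bs - index a bs = i'.+1)%N by rewrite /i'; lia.
rewrite e1 /bH (GrB_size2 (n:=n) hk (m := size bs) (fun i j hi hj => bH_cyl hi hj)) //; try lia.
rewrite -/bH !bH_0j; congr (Sz k (bq _) (bq _)); rewrite /i'; lia.
Qed.

End Bwd.
Lemma bwd_fwd mu RT RU : cyl n k mu -> subpar mu alpha -> subpar mu beta ->
  is_ssct n k alpha mu RT -> is_ssct n k beta mu RU ->
  [/\ bmu (flam mu RT RU) (fP mu RT RU) (fQ mu RT RU) = mu,
      bT (flam mu RT RU) (fP mu RT RU) (fQ mu RT RU) = RT &
      bU (flam mu RT RU) (fP mu RT RU) (fQ mu RT RU) = RU].
Proof.
move=> cmu sa sb hT hU.
set lam := flam mu RT RU; set P := fP mu RT RU; set Q := fQ mu RT RU.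
have es : bs lam P Q = fs mu RT RU.
  rewrite /bs /fs; apply: slist_eq => a.
  - exact: (fwtP cmu sa sb hT hU a).
  - exact: (fwtQ cmu sa sb hT hU a).
set m := size (fs mu RT RU).
have hss := fss mu RT RU.
have ep : forall i, (i <= m)%N -> bp lam P Q i = fG mu RT RU i m.
  move=> i hi; rewrite /bp es /P /fP -/m.
  apply: (chain_tab' hss) => //.
  - by move=> i' hi'; apply: fG_cyl.
  - by move=> i' hi'; apply: fG_hs1.
  - by rewrite fG_0j fum.
have eq : forall j, (j <= m)%N -> bq lam P Q j = fG mu RT RU m j.
  move=> j hj; rewrite /bq es /Q /fQ -/m.
  apply: (chain_tab' hss) => //.
  - by move=> i' hi'; apply: fG_cyl.
  - by move=> i' hi'; apply: fG_hs2.
  - by rewrite fG_i0 ftm.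
have eH : forall i j, (i <= m)%N -> (j <= m)%N -> bH lam P Q i j = fG mu RT RU (m - i) (m - j).
  move=> i j hi hj; rewrite /bH es -/m.
  rewrite (@Gr_congr _ _ _ _ (fun j => fG mu RT RU m (m - j)) (fun i => fG mu RT RU (m - i) m) m) //.
  - rewrite /fG; apply: (Gr_rev (L1 := Fr) (L2 := Br)) => // *; exact: BF.
  - by move=> j' hj'; apply: eq; lia.
  - by move=> i' hi'; apply: ep; lia.
split.
- by rewrite /bmu es -/m eH // subnn fG_0j fu0.
- rewrite /bT es -/m -{2}(tab_chainT hk hT cmu ca sa hss (finT RU sa hT)).
  apply: tab_ext => i hi; rewrite eH; try lia.
  by rewrite subnn subKn // fG_i0.
- rewrite /bU es -/m -{2}(tab_chainT hk hU cmu cb sb hss (finU RT sb hU)).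
  apply: tab_ext => j hj; rewrite eH; try lia.
  by rewrite subnn subKn // fG_0j.
Qed.

Lemma fwd_bwd lam RP RQ : cyl n k lam -> subpar alpha lam -> subpar beta lam ->
  is_ssct n k lam beta RP -> is_ssct n k lam alpha RQ ->
  [/\ flam (bmu lam RP RQ) (bT lam RP RQ) (bU lam RP RQ) = lam,
      fP (bmu lam RP RQ) (bT lam RP RQ) (bU lam RP RQ) = RP &
      fQ (bmu lam RP RQ) (bT lam RP RQ) (bU lam RP RQ) = RQ].
Proof.
move=> clam sal sbl hP hQ.
set mu := bmu lam RP RQ; set T := bT lam RP RQ; set U := bU lam RP RQ.
have es : fs mu T U = bs lam RP RQ.
  rewrite /bs /fs; apply: slist_eq => a.
  - exact: (bwtT clam sal sbl hP hQ a).
  - exact: (bwtU clam sal sbl hP hQ a).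
set m := size (bs lam RP RQ).
have hss := bss lam RP RQ.
have et : forall i, (i <= m)%N -> ft mu T U i = bH lam RP RQ (m - i) m.
  move=> i hi; rewrite /ft es /T /bT -/m.
  apply: (chain_tab' hss) => //.
  - by move=> i' hi'; apply: bT_cyl.
  - by move=> i' hi'; apply: bT_hs.
  - by rewrite bT0.
  - by rewrite bTm.
have eu : forall j, (j <= m)%N -> fu mu T U j = bH lam RP RQ m (m - j).
  move=> j hj; rewrite /fu es /U /bU -/m.
  apply: (chain_tab' hss) => //.
  - by move=> i' hi'; apply: bU_cyl.
  - by move=> i' hi'; apply: bU_hs.
  - by rewrite bU0.
  - by rewrite bUm.
have eG : forall i j, (i <= m)%N -> (j <= m)%N -> fG mu T U i j = bH lam RP RQ (m - i) (m - j).
  move=> i j hi hj; rewrite /fG.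
  rewrite (@Gr_congr _ _ _ _ (fun j => bH lam RP RQ m (m - j)) (fun i => bH lam RP RQ (m - i) m) m) //.
  rewrite /bH; apply: (Gr_rev (L1 := Br) (L2 := Fr)) => // *; exact: FB.
split.
- by rewrite /flam es -/m eG // subnn bH_0j -/m subn0 bqm.
- rewrite /fP es -/m -{2}(tab_chainT hk hP cb clam sbl hss (binP RQ sbl hP)).
  apply: tab_ext => i hi; rewrite eG; try lia.
  by rewrite subnn bH_i0 // -/m subKn.
- rewrite /fQ es -/m -{2}(tab_chainT hk hQ ca clam sal hss (binQ RP sal hQ)).
  apply: tab_ext => j hj; rewrite eG; try lia.
  by rewrite subnn bH_0j // -/m subKn.
Qed.

End Main.

Local Close Scope ring_scope.

Section Wrap.
Context (n k : nat) (d : Order.disp_t) (A : orderType d).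
Context (hk : (1 <= k)%N) (alpha beta : cylpar n k).

Definition ca : cyl n k (sval alpha) := svalP alpha.
Definition cb : cyl n k (sval beta) := svalP beta.

Definition Fw (x : CRSK_dom A alpha beta) : CRSK_cod A alpha beta :=
  let mu := sval (sval (projT1 x)) in
  let cmu : cyl n k mu := svalP (sval (projT1 x)) in
  let sa := proj1 (svalP (projT1 x)) in
  let sb := proj2 (svalP (projT1 x)) in
  let T := (projT2 x).1 in let U := (projT2 x).2 in
  let hT := svalP T in let hU := svalP U in
  existT _ (exist _ (exist _ (flam k (sval alpha) (sval beta) mu (sval T) (sval U))
                      (flam_cyl hk ca cb cmu sa sb hT hU))
             (conj (fsub_a hk ca cb cmu sa sb hT hU) (fsub_b hk ca cb cmu sa sb hT hU)))
    (exist _ (fP k (sval alpha) (sval beta) mu (sval T) (sval U)) (fP_ssct hk ca cb cmu sa sb hT hU),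
     exist _ (fQ k (sval alpha) (sval beta) mu (sval T) (sval U)) (fQ_ssct hk ca cb cmu sa sb hT hU)).

Definition Bw (y : CRSK_cod A alpha beta) : CRSK_dom A alpha beta :=
  let lam := sval (sval (projT1 y)) in
  let clam : cyl n k lam := svalP (sval (projT1 y)) in
  let sa := proj1 (svalP (projT1 y)) in
  let sb := proj2 (svalP (projT1 y)) in
  let P := (projT2 y).1 in let Q := (projT2 y).2 in
  let hP := svalP P in let hQ := svalP Q in
  existT _ (exist _ (exist _ (bmu k (sval alpha) (sval beta) lam (sval P) (sval Q))
                      (bmu_cyl hk ca cb clam sa sb hP hQ))
             (conj (bsub_a hk ca cb clam sa sb hP hQ) (bsub_b hk ca cb clam sa sb hP hQ)))
    (exist _ (bT k (sval alpha) (sval beta) lam (sval P) (sval Q)) (bT_ssct hk ca cb clam sa sb hP hQ),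
     exist _ (bU k (sval alpha) (sval beta) lam (sval P) (sval Q)) (bU_ssct hk ca cb clam sa sb hP hQ)).

Lemma dom_eq (x y : CRSK_dom A alpha beta) :
  sval (sval (projT1 x)) = sval (sval (projT1 y)) ->
  sval (projT2 x).1 = sval (projT2 y).1 -> sval (projT2 x).2 = sval (projT2 y).2 -> x = y.
Proof.
case: x => [[[mu1 c1] h1] [[T1 t1] [U1 u1]]]; case: y => [[[mu2 c2] h2] [[T2 t2] [U2 u2]]] /= e1 e2 e3.
subst mu2 T2 U2.
have ec : c1 = c2 by apply: proof_irrelevance.
subst c2.
have eh : h1 = h2 by apply: proof_irrelevance.
subst h2.
have et : t1 = t2 by apply: proof_irrelevance.
have eu : u1 = u2 by apply: proof_irrelevance.
by subst.
Qed.

Lemma cod_eq (x y : CRSK_cod A alpha beta) :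
  sval (sval (projT1 x)) = sval (sval (projT1 y)) ->
  sval (projT2 x).1 = sval (projT2 y).1 -> sval (projT2 x).2 = sval (projT2 y).2 -> x = y.
Proof.
case: x => [[[mu1 c1] h1] [[T1 t1] [U1 u1]]]; case: y => [[[mu2 c2] h2] [[T2 t2] [U2 u2]]] /= e1 e2 e3.
subst mu2 T2 U2.
have ec : c1 = c2 by apply: proof_irrelevance.
subst c2.
have eh : h1 = h2 by apply: proof_irrelevance.
subst h2.
have et : t1 = t2 by apply: proof_irrelevance.
have eu : u1 = u2 by apply: proof_irrelevance.
by subst.
Qed.

Lemma BwFw : cancel Fw Bw.
Proof.
move=> x; apply: dom_eq => /=;
  case: (bwd_fwd hk ca cb (svalP (sval (projT1 x))) (proj1 (svalP (projT1 x)))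
           (proj2 (svalP (projT1 x))) (svalP (projT2 x).1) (svalP (projT2 x).2)) => //.
Qed.

Lemma FwBw : cancel Bw Fw.
Proof.
move=> y; apply: cod_eq => /=;
  case: (fwd_bwd hk ca cb (svalP (sval (projT1 y))) (proj1 (svalP (projT1 y)))
           (proj2 (svalP (projT1 y))) (svalP (projT2 y).1) (svalP (projT2 y).2)) => //.
Qed.

Lemma Fw_wt (x : CRSK_dom A alpha beta) :
  wt (projT2 x).1 = wt (projT2 (Fw x)).1 /\ wt (projT2 x).2 = wt (projT2 (Fw x)).2.
Proof.
split; apply: functional_extensionality => a; symmetry.
- exact: (fwtP hk ca cb (svalP (sval (projT1 x))) (proj1 (svalP (projT1 x)))
           (proj2 (svalP (projT1 x))) (svalP (projT2 x).1) (svalP (projT2 x).2) a).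
- exact: (fwtQ hk ca cb (svalP (sval (projT1 x))) (proj1 (svalP (projT1 x)))
           (proj2 (svalP (projT1 x))) (svalP (projT2 x).1) (svalP (projT2 x).2) a).
Qed.

End Wrap.

Theorem mainTheorem1 (n k : nat) (d : Order.disp_t) (A : orderType d)
    (hk : (1 <= k)%N) (hkn : (k < n)%N) (alpha beta : cylpar n k) :
  exists f : CRSK_dom A alpha beta -> CRSK_cod A alpha beta,
    bijective f /\
    (forall x : CRSK_dom A alpha beta,
        wt (projT2 x).1 = wt (projT2 (f x)).1 /\
        wt (projT2 x).2 = wt (projT2 (f x)).2).
Proof.
exists (Fw hk (alpha:=alpha) (beta:=beta)); split.
- exact: (Bijective (BwFw hk (alpha:=alpha) (beta:=beta)) (FwBw hk (alpha:=alpha) (beta:=beta))).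
- exact: Fw_wt.
Qed.
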